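(* There exists a large set with multiplicity LS$(3,4,14;720)$.
   Context: A Steiner system S$(t,k,n)$ is a pair $(Q,B)$ where $Q$ is an $n$-set and $B$ is a collection of $k$-subsets (blocks) of $Q$ such that every $t$-subset of $Q$ is contained in exactly one block. A large set with multiplicity $\mu$, LS$(t,k,n;\mu)$, is a family (the same system may occur more than once) of Steiner systems S$(t,k,n)$ on a common $n$-set $Q$ such that every $k$-subset of $Q$ is a block of exactly $\mu$ of the systems. *)

(* Defs.v *)
From mathcomp Require Import all_boot.
Unset Printing Implicit Defensive.

Definition steiner_system (t k n : nat) (B : {set {set 'I_n}}) : Prop :=
  (forall b, b \in B -> #|b| = k) /\
  (forall T : {set 'I_n}, #|T| = t -> #|[set b in B | T \subset b]| = 1).

(* A large set with multiplicity mu, LS(t,k,n;mu): a family (a list, so the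
   same system may occur several times) of Steiner systems S(t,k,n) on the
   common n-set 'I_n such that every k-subset is a block of exactly mu of
   the systems (counted with multiplicity). *)
Definition large_set (t k n mu : nat) (F : seq {set {set 'I_n}}) : Prop :=
  (forall B, B \in F -> steiner_system t k n B) /\
  (forall K : {set 'I_n}, #|K| = k -> count (fun B : {set {set 'I_n}} => K \in B) F = mu).

(* Main.v *)
Require Import Defs.

From mathcomp Require Import all_boot.

Set Implicit Arguments.
Unset Strict Implicit.
Unset Printing Implicit Defensive.

Definition Bs : seq (seq nat) := [:: [:: 0; 1; 2; 3]; [:: 0; 1; 4; 5]; [:: 0; 1; 6; 7]; [:: 0; 1; 8; 9]; [:: 0; 1; 10; 11]; [:: 0; 1; 12; 13]; [:: 0; 2; 4; 6]; [:: 0; 2; 5; 8]; [:: 0; 2; 7; 10]; [:: 0; 2; 9; 12]; [:: 0; 2; 11; 13]; [:: 0; 3; 4; 9]; [:: 0; 4; 8; 10]; [:: 0; 4; 7; 13]; [:: 0; 4; 11; 12]; [:: 0; 5; 7; 9]; [:: 0; 6; 9; 11]; [:: 0; 3; 5; 11]; [:: 0; 7; 8; 11]; [:: 0; 3; 7; 12]; [:: 0; 6; 8; 12]; [:: 0; 3; 8; 13]; [:: 0; 3; 6; 10]; [:: 0; 5; 6; 13]; [:: 0; 5; 10; 12]; [:: 0; 9; 10; 13]; [:: 1; 2; 4; 8]; [:: 1; 2; 5; 7]; [:: 1; 2; 6; 11]; [:: 1; 2; 10; 12]; [:: 1; 2; 9; 13]; [:: 1; 4; 11; 13]; [:: 1;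 5; 8; 11]; [:: 1; 5; 10; 13]; [:: 1; 3; 7; 13]; [:: 1; 6; 8; 13]; [:: 1; 3; 8; 10]; [:: 1; 7; 8; 12]; [:: 1; 7; 9; 11]; [:: 1; 3; 11; 12]; [:: 1; 3; 4; 6]; [:: 1; 3; 5; 9]; [:: 1; 4; 7; 10]; [:: 1; 4; 9; 12]; [:: 1; 5; 6; 12]; [:: 1; 6; 9; 10]; [:: 2; 5; 6; 9]; [:: 2; 6; 8; 10]; [:: 2; 7; 8; 13]; [:: 2; 6; 7; 12]; [:: 2; 3; 6; 13]; [:: 2; 4; 10; 13]; [:: 2; 5; 12; 13]; [:: 2; 3; 4; 12]; [:: 2; 3; 5; 10]; [:: 2; 4; 5; 11]; [:: 2; 4; 7; 9]; [:: 2; 3; 7; 11]; [:: 2; 3; 8; 9]; [:: 2; 8; 11; 12]; [:: 2; 9; 10; 11]; [:: 3; 4; 10; 11]; [:: 3; 4; 5; 13]; [:: 3; 4; 7; 8]; [:: 3; 5; 6; 7]; [:: 3; 5; 8; 12]; [:: 3; 6; 8; 11]; [:: 3; 6; 9; 12]; [:: 3; 7; 9; 10]; [:: 3; 9; 11; 13]; [:: 3; 10; 12; 13]; [:: 4; 5; 7; 12]; [:: 4; 6; 7; 11]; [:: 4; 8; 9; 11]; [:: 4; 5; 6; 8]; [:: 4; 5; 9; 10]; [:: 4; 6; 9; 13]; [:: 4; 6; 10; 12]; [:: 4; 8; 12; 13]; [:: 5; 6; 10; 11]; [:: 5; 7; 8; 10]; [:: 5; 7; 11; 13]; [:: 5;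 8; 9; 13]; [:: 5; 9; 11; 12]; [:: 6; 7; 8; 9]; [:: 6; 7; 10; 13]; [:: 6; 11; 12; 13]; [:: 7; 9; 12; 13]; [:: 7; 10; 11; 12]; [:: 8; 9; 10; 12]; [:: 8; 10; 11; 13]].
Definition Hs : seq (seq nat) := [:: [:: 0; 1; 2; 3; 4; 5; 6; 7; 8; 9; 10; 11; 12; 13]; [:: 0; 1; 2; 4; 9; 8; 10; 3; 6; 7; 5; 11; 12; 13]; [:: 0; 1; 2; 5; 10; 9; 3; 8; 4; 6; 7; 11; 12; 13]; [:: 0; 1; 2; 6; 8; 3; 9; 10; 7; 5; 4; 11; 12; 13]; [:: 0; 1; 2; 7; 3; 10; 8; 9; 5; 4; 6; 11; 12; 13]; [:: 0; 1; 2; 8; 5; 7; 4; 6; 9; 10; 3; 11; 12; 13]; [:: 0; 1; 2; 9; 7; 6; 5; 4; 10; 3; 8; 11; 12; 13]; [:: 0; 1; 2; 10; 6; 4; 7; 5; 3; 8; 9; 11; 12; 13]; [:: 0; 1; 3; 2; 6; 8; 4; 10; 5; 9; 7; 11; 12; 13]; [:: 0; 1; 3; 4; 5; 2; 9; 7; 10; 8; 6; 11; 12; 13]; [:: 0; 1; 3; 5; 8; 10; 6; 4; 9; 7; 2; 11; 12; 13]; [:: 0; 1; 3; 6; 9; 5; 7; 2; 4; 10; 8; 11; 12; 13]; [:: 0; 1; 3; 7; 4; 6; 10; 8; 2; 5; 9; 11; 12; 13]; [:: 0; 1; 3; 8; 7; 9; 2; 5; 6; 4; 10; 11; 12; 13];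 [:: 0; 1; 3; 9; 10; 4; 8; 6; 7; 2; 5; 11; 12; 13]; [:: 0; 1; 3; 10; 2; 7; 5; 9; 8; 6; 4; 11; 12; 13]; [:: 0; 1; 4; 2; 10; 6; 9; 5; 8; 7; 3; 11; 12; 13]; [:: 0; 1; 4; 3; 9; 10; 5; 6; 2; 8; 7; 11; 12; 13]; [:: 0; 1; 4; 5; 2; 3; 8; 7; 6; 10; 9; 11; 12; 13]; [:: 0; 1; 4; 6; 3; 7; 2; 8; 10; 9; 5; 11; 12; 13]; [:: 0; 1; 4; 7; 5; 9; 6; 10; 3; 2; 8; 11; 12; 13]; [:: 0; 1; 4; 8; 6; 5; 10; 9; 7; 3; 2; 11; 12; 13]; [:: 0; 1; 4; 9; 8; 2; 7; 3; 5; 6; 10; 11; 12; 13]; [:: 0; 1; 4; 10; 7; 8; 3; 2; 9; 5; 6; 11; 12; 13]; [:: 0; 1; 5; 2; 3; 4; 10; 7; 9; 6; 8; 11; 12; 13]; [:: 0; 1; 5; 3; 6; 9; 8; 2; 10; 7; 4; 11; 12; 13]; [:: 0; 1; 5; 4; 8; 6; 2; 9; 3; 10; 7; 11; 12; 13]; [:: 0; 1; 5; 6; 7; 10; 4; 3; 8; 2; 9; 11; 12; 13]; [:: 0; 1; 5; 7; 2; 8; 9; 6; 4; 3; 10; 11; 12; 13]; [:: 0; 1; 5; 8; 10; 3; 7; 4; 2; 9; 6; 11; 12; 13]; [:: 0; 1; 5; 9; 4; 7; 3; 10; 6; 8; 2; 11; 12; 13]; [:: 0; 1; 5; 10; 9;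 2; 6; 8; 7; 4; 3; 11; 12; 13]; [:: 0; 1; 6; 2; 9; 7; 8; 4; 3; 5; 10; 11; 12; 13]; [:: 0; 1; 6; 3; 7; 4; 9; 8; 5; 10; 2; 11; 12; 13]; [:: 0; 1; 6; 4; 2; 10; 3; 5; 7; 9; 8; 11; 12; 13]; [:: 0; 1; 6; 5; 4; 8; 7; 9; 10; 2; 3; 11; 12; 13]; [:: 0; 1; 6; 7; 10; 5; 2; 3; 9; 8; 4; 11; 12; 13]; [:: 0; 1; 6; 8; 3; 2; 5; 10; 4; 7; 9; 11; 12; 13]; [:: 0; 1; 6; 9; 5; 3; 10; 2; 8; 4; 7; 11; 12; 13]; [:: 0; 1; 6; 10; 8; 9; 4; 7; 2; 3; 5; 11; 12; 13]; [:: 0; 1; 7; 2; 8; 5; 3; 6; 10; 4; 9; 11; 12; 13]; [:: 0; 1; 7; 3; 10; 2; 4; 9; 6; 5; 8; 11; 12; 13]; [:: 0; 1; 7; 4; 6; 3; 5; 8; 9; 2; 10; 11; 12; 13]; [:: 0; 1; 7; 5; 9; 4; 2; 10; 8; 3; 6; 11; 12; 13]; [:: 0; 1; 7; 6; 2; 9; 10; 4; 5; 8; 3; 11; 12; 13]; [:: 0; 1; 7; 8; 4; 10; 9; 2; 3; 6; 5; 11; 12; 13]; [:: 0; 1; 7; 9; 3; 8; 6; 5; 2; 10; 4; 11; 12; 13]; [:: 0; 1; 7; 10; 5; 6; 8; 3; 4; 9; 2; 11; 12; 13]; [:: 0; 1; 8; 2; 4; 9; 5; 3; 7; 10; 6;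 11; 12; 13]; [:: 0; 1; 8; 3; 2; 6; 7; 10; 9; 4; 5; 11; 12; 13]; [:: 0; 1; 8; 4; 10; 7; 6; 2; 5; 3; 9; 11; 12; 13]; [:: 0; 1; 8; 5; 7; 2; 10; 6; 3; 9; 4; 11; 12; 13]; [:: 0; 1; 8; 6; 5; 4; 3; 9; 2; 7; 10; 11; 12; 13]; [:: 0; 1; 8; 7; 9; 3; 4; 5; 10; 6; 2; 11; 12; 13]; [:: 0; 1; 8; 9; 6; 10; 2; 7; 4; 5; 3; 11; 12; 13]; [:: 0; 1; 8; 10; 3; 5; 9; 4; 6; 2; 7; 11; 12; 13]; [:: 0; 1; 9; 2; 5; 10; 7; 8; 6; 3; 4; 11; 12; 13]; [:: 0; 1; 9; 3; 8; 7; 10; 5; 4; 2; 6; 11; 12; 13]; [:: 0; 1; 9; 4; 7; 5; 8; 10; 2; 6; 3; 11; 12; 13]; [:: 0; 1; 9; 5; 3; 6; 4; 2; 7; 8; 10; 11; 12; 13]; [:: 0; 1; 9; 6; 10; 8; 5; 7; 3; 4; 2; 11; 12; 13]; [:: 0; 1; 9; 7; 6; 2; 3; 4; 8; 10; 5; 11; 12; 13]; [:: 0; 1; 9; 8; 2; 4; 6; 3; 10; 5; 7; 11; 12; 13]; [:: 0; 1; 9; 10; 4; 3; 2; 6; 5; 7; 8; 11; 12; 13]; [:: 0; 1; 10; 2; 7; 3; 6; 9; 4; 8; 5; 11; 12; 13]; [:: 0; 1; 10; 3; 5; 8; 2; 4; 7; 6; 9; 11; 12; 13]; [:: 0; 1;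 10; 4; 3; 9; 7; 6; 8; 5; 2; 11; 12; 13]; [:: 0; 1; 10; 5; 6; 7; 9; 3; 2; 4; 8; 11; 12; 13]; [:: 0; 1; 10; 6; 4; 2; 8; 5; 9; 3; 7; 11; 12; 13]; [:: 0; 1; 10; 7; 8; 4; 5; 2; 6; 9; 3; 11; 12; 13]; [:: 0; 1; 10; 8; 9; 6; 3; 7; 5; 2; 4; 11; 12; 13]; [:: 0; 1; 10; 9; 2; 5; 4; 8; 3; 7; 6; 11; 12; 13]; [:: 1; 0; 2; 3; 6; 7; 4; 5; 10; 9; 8; 11; 12; 13]; [:: 1; 0; 2; 4; 10; 3; 9; 8; 5; 7; 6; 11; 12; 13]; [:: 1; 0; 2; 5; 3; 8; 10; 9; 7; 6; 4; 11; 12; 13]; [:: 1; 0; 2; 6; 9; 10; 8; 3; 4; 5; 7; 11; 12; 13]; [:: 1; 0; 2; 7; 8; 9; 3; 10; 6; 4; 5; 11; 12; 13]; [:: 1; 0; 2; 8; 4; 6; 5; 7; 3; 10; 9; 11; 12; 13]; [:: 1; 0; 2; 9; 5; 4; 7; 6; 8; 3; 10; 11; 12; 13]; [:: 1; 0; 2; 10; 7; 5; 6; 4; 9; 8; 3; 11; 12; 13]; [:: 1; 0; 3; 2; 4; 10; 6; 8; 7; 9; 5; 11; 12; 13]; [:: 1; 0; 3; 4; 9; 7; 5; 2; 6; 8; 10; 11; 12; 13]; [:: 1; 0; 3; 5; 6; 4; 8; 10; 2; 7; 9; 11; 12; 13]; [:: 1; 0; 3; 6; 7; 2; 9; 5;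 8; 10; 4; 11; 12; 13]; [:: 1; 0; 3; 7; 10; 8; 4; 6; 9; 5; 2; 11; 12; 13]; [:: 1; 0; 3; 8; 2; 5; 7; 9; 10; 4; 6; 11; 12; 13]; [:: 1; 0; 3; 9; 8; 6; 10; 4; 5; 2; 7; 11; 12; 13]; [:: 1; 0; 3; 10; 5; 9; 2; 7; 4; 6; 8; 11; 12; 13]; [:: 1; 0; 4; 2; 9; 5; 10; 6; 3; 7; 8; 11; 12; 13]; [:: 1; 0; 4; 3; 5; 6; 9; 10; 7; 8; 2; 11; 12; 13]; [:: 1; 0; 4; 5; 8; 7; 2; 3; 9; 10; 6; 11; 12; 13]; [:: 1; 0; 4; 6; 2; 8; 3; 7; 5; 9; 10; 11; 12; 13]; [:: 1; 0; 4; 7; 6; 10; 5; 9; 8; 2; 3; 11; 12; 13]; [:: 1; 0; 4; 8; 10; 9; 6; 5; 2; 3; 7; 11; 12; 13]; [:: 1; 0; 4; 9; 7; 3; 8; 2; 10; 6; 5; 11; 12; 13]; [:: 1; 0; 4; 10; 3; 2; 7; 8; 6; 5; 9; 11; 12; 13]; [:: 1; 0; 5; 2; 10; 7; 3; 4; 8; 6; 9; 11; 12; 13]; [:: 1; 0; 5; 3; 8; 2; 6; 9; 4; 7; 10; 11; 12; 13]; [:: 1; 0; 5; 4; 2; 9; 8; 6; 7; 10; 3; 11; 12; 13]; [:: 1; 0; 5; 6; 4; 3; 7; 10; 9; 2; 8; 11; 12; 13]; [:: 1; 0; 5; 7; 9; 6; 2; 8; 10; 3; 4; 11; 12; 13];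 [:: 1; 0; 5; 8; 7; 4; 10; 3; 6; 9; 2; 11; 12; 13]; [:: 1; 0; 5; 9; 3; 10; 4; 7; 2; 8; 6; 11; 12; 13]; [:: 1; 0; 5; 10; 6; 8; 9; 2; 3; 4; 7; 11; 12; 13]; [:: 1; 0; 6; 2; 8; 4; 9; 7; 10; 5; 3; 11; 12; 13]; [:: 1; 0; 6; 3; 9; 8; 7; 4; 2; 10; 5; 11; 12; 13]; [:: 1; 0; 6; 4; 3; 5; 2; 10; 8; 9; 7; 11; 12; 13]; [:: 1; 0; 6; 5; 7; 9; 4; 8; 3; 2; 10; 11; 12; 13]; [:: 1; 0; 6; 7; 2; 3; 10; 5; 4; 8; 9; 11; 12; 13]; [:: 1; 0; 6; 8; 5; 10; 3; 2; 9; 7; 4; 11; 12; 13]; [:: 1; 0; 6; 9; 10; 2; 5; 3; 7; 4; 8; 11; 12; 13]; [:: 1; 0; 6; 10; 4; 7; 8; 9; 5; 3; 2; 11; 12; 13]; [:: 1; 0; 7; 2; 3; 6; 8; 5; 9; 4; 10; 11; 12; 13]; [:: 1; 0; 7; 3; 4; 9; 10; 2; 8; 5; 6; 11; 12; 13]; [:: 1; 0; 7; 4; 5; 8; 6; 3; 10; 2; 9; 11; 12; 13]; [:: 1; 0; 7; 5; 2; 10; 9; 4; 6; 3; 8; 11; 12; 13]; [:: 1; 0; 7; 6; 10; 4; 2; 9; 3; 8; 5; 11; 12; 13]; [:: 1; 0; 7; 8; 9; 2; 4; 10; 5; 6; 3; 11; 12; 13]; [:: 1; 0; 7; 9; 6;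 5; 3; 8; 4; 10; 2; 11; 12; 13]; [:: 1; 0; 7; 10; 8; 3; 5; 6; 2; 9; 4; 11; 12; 13]; [:: 1; 0; 8; 2; 5; 3; 4; 9; 6; 10; 7; 11; 12; 13]; [:: 1; 0; 8; 3; 7; 10; 2; 6; 5; 4; 9; 11; 12; 13]; [:: 1; 0; 8; 4; 6; 2; 10; 7; 9; 3; 5; 11; 12; 13]; [:: 1; 0; 8; 5; 10; 6; 7; 2; 4; 9; 3; 11; 12; 13]; [:: 1; 0; 8; 6; 3; 9; 5; 4; 10; 7; 2; 11; 12; 13]; [:: 1; 0; 8; 7; 4; 5; 9; 3; 2; 6; 10; 11; 12; 13]; [:: 1; 0; 8; 9; 2; 7; 6; 10; 3; 5; 4; 11; 12; 13]; [:: 1; 0; 8; 10; 9; 4; 3; 5; 7; 2; 6; 11; 12; 13]; [:: 1; 0; 9; 2; 7; 8; 5; 10; 4; 3; 6; 11; 12; 13]; [:: 1; 0; 9; 3; 10; 5; 8; 7; 6; 2; 4; 11; 12; 13]; [:: 1; 0; 9; 4; 8; 10; 7; 5; 3; 6; 2; 11; 12; 13]; [:: 1; 0; 9; 5; 4; 2; 3; 6; 10; 8; 7; 11; 12; 13]; [:: 1; 0; 9; 6; 5; 7; 10; 8; 2; 4; 3; 11; 12; 13]; [:: 1; 0; 9; 7; 3; 4; 6; 2; 5; 10; 8; 11; 12; 13]; [:: 1; 0; 9; 8; 6; 3; 2; 4; 7; 5; 10; 11; 12; 13]; [:: 1; 0; 9; 10; 2; 6; 4; 3; 8; 7; 5;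 11; 12; 13]; [:: 1; 0; 10; 2; 6; 9; 7; 3; 5; 8; 4; 11; 12; 13]; [:: 1; 0; 10; 3; 2; 4; 5; 8; 9; 6; 7; 11; 12; 13]; [:: 1; 0; 10; 4; 7; 6; 3; 9; 2; 5; 8; 11; 12; 13]; [:: 1; 0; 10; 5; 9; 3; 6; 7; 8; 4; 2; 11; 12; 13]; [:: 1; 0; 10; 6; 8; 5; 4; 2; 7; 3; 9; 11; 12; 13]; [:: 1; 0; 10; 7; 5; 2; 8; 4; 3; 9; 6; 11; 12; 13]; [:: 1; 0; 10; 8; 3; 7; 9; 6; 4; 2; 5; 11; 12; 13]; [:: 1; 0; 10; 9; 4; 8; 2; 5; 6; 7; 3; 11; 12; 13]].
Definition Ts : seq (seq nat) := [:: [:: 0; 1; 2; 3; 4; 5; 6; 7; 8; 9; 10; 11; 12; 13]; [:: 0; 2; 1; 3; 10; 6; 5; 8; 7; 9; 4; 11; 12; 13]; [:: 0; 3; 1; 2; 7; 4; 8; 5; 10; 9; 6; 11; 12; 13]; [:: 0; 4; 1; 2; 3; 9; 6; 8; 5; 7; 10; 11; 12; 13]; [:: 0; 5; 1; 2; 8; 10; 4; 9; 7; 6; 3; 11; 12; 13]; [:: 0; 6; 1; 2; 10; 8; 7; 3; 4; 5; 9; 11; 12; 13]; [:: 0; 7; 1; 2; 9; 3; 5; 10; 6; 4; 8; 11; 12; 13]; [:: 0; 8; 1; 2; 6; 5; 9; 7; 3; 10; 4; 11; 12; 13]; [:: 0; 9; 1; 2; 4; 7; 10; 6; 8; 3; 5;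 11; 12; 13]; [:: 0; 10; 1; 2; 5; 6; 3; 4; 9; 8; 7; 11; 12; 13]; [:: 1; 2; 0; 3; 8; 4; 7; 10; 5; 9; 6; 11; 12; 13]; [:: 1; 3; 0; 2; 5; 6; 10; 7; 8; 9; 4; 11; 12; 13]; [:: 1; 4; 0; 2; 8; 10; 5; 3; 6; 7; 9; 11; 12; 13]; [:: 1; 5; 0; 2; 9; 3; 7; 8; 4; 6; 10; 11; 12; 13]; [:: 1; 6; 0; 2; 3; 9; 4; 10; 7; 5; 8; 11; 12; 13]; [:: 1; 7; 0; 2; 10; 8; 6; 9; 5; 4; 3; 11; 12; 13]; [:: 1; 8; 0; 2; 7; 4; 3; 6; 9; 10; 5; 11; 12; 13]; [:: 1; 9; 0; 2; 6; 5; 8; 4; 10; 3; 7; 11; 12; 13]; [:: 1; 10; 0; 2; 4; 7; 9; 5; 3; 8; 6; 11; 12; 13]; [:: 2; 3; 0; 1; 6; 5; 4; 8; 7; 9; 10; 11; 12; 13]; [:: 2; 4; 0; 1; 10; 8; 9; 6; 3; 7; 5; 11; 12; 13]; [:: 2; 5; 0; 1; 3; 9; 10; 4; 8; 6; 7; 11; 12; 13]; [:: 2; 6; 0; 1; 9; 3; 8; 7; 10; 5; 4; 11; 12; 13]; [:: 2; 7; 0; 1; 8; 10; 3; 5; 9; 4; 6; 11; 12; 13]; [:: 2; 8; 0; 1; 4; 7; 5; 9; 6; 10; 3; 11; 12; 13]; [:: 2; 9; 0; 1; 5; 6; 7; 10; 4; 3; 8; 11; 12; 13]; [:: 2; 10;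 0; 1; 7; 4; 6; 3; 5; 8; 9; 11; 12; 13]; [:: 3; 4; 0; 1; 9; 2; 5; 10; 7; 8; 6; 11; 12; 13]; [:: 3; 5; 0; 1; 6; 10; 8; 9; 4; 7; 2; 11; 12; 13]; [:: 3; 6; 0; 1; 7; 5; 9; 4; 2; 10; 8; 11; 12; 13]; [:: 3; 7; 0; 1; 10; 6; 4; 2; 8; 5; 9; 11; 12; 13]; [:: 3; 8; 0; 1; 2; 9; 7; 6; 5; 4; 10; 11; 12; 13]; [:: 3; 9; 0; 1; 8; 4; 10; 7; 6; 2; 5; 11; 12; 13]; [:: 3; 10; 0; 1; 5; 7; 2; 8; 9; 6; 4; 11; 12; 13]; [:: 4; 5; 0; 1; 8; 3; 2; 6; 7; 10; 9; 11; 12; 13]; [:: 4; 6; 0; 1; 2; 7; 3; 10; 8; 9; 5; 11; 12; 13]; [:: 4; 7; 0; 1; 6; 9; 5; 3; 10; 2; 8; 11; 12; 13]; [:: 4; 8; 0; 1; 10; 5; 6; 7; 9; 3; 2; 11; 12; 13]; [:: 4; 9; 0; 1; 7; 2; 8; 5; 3; 6; 10; 11; 12; 13]; [:: 4; 10; 0; 1; 3; 8; 7; 9; 2; 5; 6; 11; 12; 13]; [:: 5; 6; 0; 1; 4; 10; 7; 8; 3; 2; 9; 11; 12; 13]; [:: 5; 7; 0; 1; 9; 8; 2; 4; 6; 3; 10; 11; 12; 13]; [:: 5; 8; 0; 1; 7; 3; 10; 2; 4; 9; 6; 11; 12; 13]; [:: 5; 9; 0; 1; 3; 7; 4; 6;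 10; 8; 2; 11; 12; 13]; [:: 5; 10; 0; 1; 6; 2; 9; 7; 8; 4; 3; 11; 12; 13]; [:: 6; 7; 0; 1; 2; 5; 10; 9; 3; 8; 4; 11; 12; 13]; [:: 6; 8; 0; 1; 5; 2; 3; 4; 10; 7; 9; 11; 12; 13]; [:: 6; 9; 0; 1; 10; 3; 5; 8; 2; 4; 7; 11; 12; 13]; [:: 6; 10; 0; 1; 4; 9; 8; 2; 7; 3; 5; 11; 12; 13]; [:: 7; 8; 0; 1; 9; 10; 4; 3; 2; 6; 5; 11; 12; 13]; [:: 7; 9; 0; 1; 6; 8; 3; 2; 5; 10; 4; 11; 12; 13]; [:: 7; 10; 0; 1; 8; 6; 5; 4; 3; 9; 2; 11; 12; 13]; [:: 8; 9; 0; 1; 2; 10; 6; 4; 7; 5; 3; 11; 12; 13]; [:: 8; 10; 0; 1; 9; 5; 3; 6; 4; 2; 7; 11; 12; 13]; [:: 9; 10; 0; 1; 2; 3; 4; 5; 6; 7; 8; 11; 12; 13]].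

Definition comp (t h : seq nat) : seq nat := map (nth 0 t) h.
Definition Ls : seq (seq nat) := [seq comp t h | t <- Ts, h <- Hs].

Definition vec (b : seq nat) : seq bool := [seq i \in b | i <- iota 0 14].
Definition img (g b : seq nat) : seq nat := map (nth 0 g) b.

Inductive trie := Leaf of nat | Node of trie & trie.
Fixpoint get (k : seq bool) (t : trie) {struct t} : nat :=
  match t with
  | Leaf n => n
  | Node l r => match k with [::] => 0 | b :: k' => get k' (if b then r else l) end
  end.
Fixpoint incr (k : seq bool) (t : trie) : trie :=
  match k with
  | [::] => Leaf (get [::] t).+1
  | b :: k' => match t with
     | Leaf n => if b then Node (Leaf n) (incr k' (Leaf n))
                 else Node (incr k' (Leaf n)) (Leaf n)
     | Node l r => if b then Node l (incr k' r) else Node (incr k' l) r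
     end
  end.

Lemma get_incr k' : forall k t, size k = size k' -> get k (incr k' t) = get k t + (k == k').
Proof.
elim: k' => [|b k' IH].
  case=> [|c k] t //= _; by case: t => [n|l r] /=; rewrite addn1.
case=> [|c k] t //= [Hs]; case: t => [n|l r] /=.
  by case: b; case: c; rewrite /= ?eqseq_cons /= ?IH ?addn0.
by case: b; case: c; rewrite /= ?eqseq_cons /= ?IH ?addn0.
Qed.

Lemma get_fold (keys : seq (seq bool)) k t :
  all (fun v => size v == size k) keys ->
  get k (foldl (fun t v => incr v t) t keys) = get k t + count (pred1 k) keys.
Proof.
elim: keys t => [|v keys IH] t /=; first by rewrite addn0.
case/andP=> /eqP Hv Hk; rewrite IH // get_incr // addnA; congr (_ + _ + _).
by rewrite eq_sym.
Qed.

Fixpoint allbits (n : nat) : seq (seq bool) :=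
  match n with
  | 0 => [:: [::]]
  | n'.+1 => [seq b :: v | b <- [:: true; false], v <- allbits n']
  end.

Lemma allbitsP v : v \in allbits (size v).
Proof.
elim: v => [|b v IH] //.
change (b :: v \in [seq b :: v | b <- [:: true; false], v <- allbits (size v)]).
by apply: (allpairs_f (fun b v => b :: v)) => //; case: b.
Qed.

Definition bitsk (k : nat) := [seq v <- allbits 14 | count id v == k].

Definition pv (p : seq nat) (w : seq bool) : seq bool := [seq nth false w (nth 0 p i) | i <- iota 0 14].

Definition keysH : seq (seq bool) := flatten [seq [seq vec (img h b) | b <- Bs] | h <- Hs].
Definition TrH : trie := foldl (fun t v => incr v t) (Leaf 0) keysH.

Definition subv (v w : seq bool) := all (fun i => nth false v i ==> nth false w i) (iota 0 14).

Definition checkc (tr : trie) := all (fun w => sumn [seq get (pv t w) tr | t <- Ts] == 720) (bitsk 4).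

Definition gok (g : seq nat) := (size g == 14) && uniq g && all (fun x => x < 14) g.

Lemma c_count : checkc TrH.
Proof. by vm_compute. Qed.
Lemma c_blocks : all (fun b => all (fun x => x < 14) b && (count id (vec b) == 4)) Bs.
Proof. by vm_compute. Qed.
Lemma c_uniq : uniq (map vec Bs).
Proof. by vm_compute. Qed.
Lemma c_triples : all (fun v => count (fun b => subv v (vec b)) Bs == 1) (bitsk 3).
Proof. by vm_compute. Qed.
Lemma c_permsH : all gok Hs.
Proof. by vm_compute. Qed.
Lemma c_permsT : all gok Ts.
Proof. by vm_compute. Qed.

Definition vecS (X : {set 'I_14}) : seq bool := [seq i \in X | i <- enum 'I_14].

Lemma size_vecS X : size (vecS X) = 14.
Proof. by rewrite size_map size_enum_ord. Qed.

Lemma size_vec b : size (vec b) = 14.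
Proof. by rewrite size_map size_iota. Qed.

Lemma nth_vecS X i : i < 14 -> nth false (vecS X) i = (inord i \in X).
Proof.
move=> Hi; rewrite (nth_map ord0) ?size_enum_ord //; congr (_ \in X).
by apply: val_inj; rewrite /= inordK // nth_enum_ord.
Qed.

Lemma vecS_inj : injective vecS.
Proof.
move=> X Y H; apply/setP => j.
by rewrite -(inord_val j) -!nth_vecS // H.
Qed.

Lemma count_vecS (X : {set 'I_14}) : count id (vecS X) = #|X|.
Proof.
rewrite count_map -size_filter cardE; congr size; rewrite /enum_mem -enumT.
by rewrite -filter_predI; apply: eq_filter => x; rewrite /= andbT.
Qed.

Definition blockset (b : seq nat) : {set 'I_14} := [set i : 'I_14 | nat_of_ord i \in b].

Lemma vecS_blockset b : vecS (blockset b) = vec b.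
Proof.
apply: (@eq_from_nth _ false); rewrite ?size_vecS ?size_vec // => i Hi.
by rewrite nth_vecS // (nth_map 0) ?size_iota // nth_iota // inE inordK.
Qed.

Lemma subv_ok (T Y : {set 'I_14}) : (T \subset Y) = subv (vecS T) (vecS Y).
Proof.
apply/subsetP/allP.
- move=> H i; rewrite mem_iota add0n => /andP [_ Hi].
  by rewrite !nth_vecS //; apply/implyP; apply: H.
- move=> H j jT; have := H j; rewrite mem_iota add0n ltn_ord => /(_ isT).
  by rewrite !nth_vecS // inord_val jT.
Qed.

Lemma card_filt (s : seq {set 'I_14}) (P : pred {set 'I_14}) :
  uniq s -> #|[set X | (X \in s) && P X]| = count P s.
Proof.
move=> Us.
have -> : [set X | (X \in s) && P X] = [set X in filter P s].
  by apply/setP => X; rewrite !inE mem_filter andbC.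
rewrite cardsE; move/card_uniqP: (filter_uniq P Us) => ->.
by rewrite size_filter.
Qed.

Lemma bitsk_mem (X : {set 'I_14}) k : #|X| = k -> vecS X \in bitsk k.
Proof.
move=> HX; rewrite mem_filter count_vecS HX eqxx andTb.
by have := allbitsP (vecS X); rewrite size_vecS.
Qed.

Definition Bset : {set {set 'I_14}} := [set X | X \in map blockset Bs].

Lemma uniqB : uniq (map blockset Bs).
Proof.
apply: (@map_uniq _ _ vecS); rewrite -map_comp.
by rewrite (eq_map vecS_blockset) c_uniq.
Qed.

Lemma steinerB : steiner_system 3 4 14 Bset.
Proof.
split.
- move=> X; rewrite inE => /mapP [b bB ->].
  rewrite -count_vecS vecS_blockset.
  by have /andP [_ /eqP] := allP c_blocks b bB.
- move=> T HT.
  have -> : [set b in Bset | T \subset b] =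
            [set X | (X \in map blockset Bs) && (T \subset X)].
    by apply/setP => X; rewrite !in_set.
  rewrite card_filt ?uniqB // count_map.
  rewrite (eq_count (a2 := fun b => subv (vecS T) (vec b))); last first.
    by move=> b /=; rewrite subv_ok vecS_blockset.
  by apply/eqP; apply: (allP c_triples); apply: bitsk_mem.
Qed.

Lemma steiner_image n (f : 'I_n -> 'I_n) (B : {set {set 'I_n}}) t k :
  injective f -> steiner_system t k n B ->
  steiner_system t k n ((fun X : {set 'I_n} => f @: X) @: B).
Proof.
move=> finj [H1 H2]; split.
- by move=> b /imsetP [X XB ->]; rewrite card_imset //; apply: H1.
- move=> T HT.
  pose h := invF finj.
  have hinj : injective h by apply: (can_inj (f_invF finj)).
  have -> : [set b in (fun X : {set 'I_n} => f @: X) @: B | T \subset b] =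
            (fun X : {set 'I_n} => f @: X) @: [set X in B | h @: T \subset X].
    apply/setP => Y; rewrite inE; apply/andP/imsetP.
    + case=> /imsetP [X XB ->] sub; exists X => //; rewrite inE XB /=.
      apply/subsetP => x /imsetP [y yT ->].
      have /imsetP [z zX ->] := subsetP sub y yT.
      by rewrite /h invF_f.
    + case=> X; rewrite inE => /andP [XB sub] ->; split; first exact: imset_f.
      apply/subsetP => y yT; rewrite -(f_invF finj y); apply: imset_f.
      by apply: (subsetP sub); apply: imset_f.
  rewrite card_imset; last exact: imset_inj.
  by apply: H2; rewrite card_imset.
Qed.

Definition pf (g : seq nat) (i : 'I_14) : 'I_14 := inord (nth 0 g i).
Definition system (g : seq nat) : {set {set 'I_14}} := (fun X : {set 'I_14} => pf g @: X) @: Bset.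
Definition Fam : seq {set {set 'I_14}} := map system Ls.


Lemma pf_inj g : gok g -> injective (pf g).
Proof.
case/andP => /andP [/eqP Hs Hu] Ha i j /(congr1 val) /=.
have lt x : x < 14 -> nth 0 g x < 14.
  by move=> Hx; apply: (allP Ha); apply: mem_nth; rewrite Hs.
rewrite !inordK ?lt // => /eqP; rewrite nth_uniq ?Hs //.
by move/eqP => /val_inj.
Qed.

Lemma pf_blockset g b : gok g -> all (fun x => x < 14) b ->
  pf g @: blockset b = blockset (img g b).
Proof.
case/andP => /andP [/eqP Hs Hu] Ha Hb.
have lt x : x < 14 -> nth 0 g x < 14.
  by move=> Hx; apply: (allP Ha); apply: mem_nth; rewrite Hs.
apply/setP => j; rewrite [RHS]inE; apply/imsetP/mapP.
- case=> i; rewrite inE => ib ->; exists (nat_of_ord i) => //.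
  by rewrite inordK ?lt.
- case=> x xb Hj; have x14 : x < 14 by apply: (allP Hb).
  exists (inord x); first by rewrite inE inordK.
  by apply: val_inj; rewrite /= !inordK ?lt // -Hj.
Qed.

Lemma count_sumn (T : eqType) (s : seq T) (a : pred T) (c : T -> nat) :
  {in s, forall x, (a x : nat) = c x} -> count a s = sumn (map c s).
Proof.
elim: s => [|x s IH] //= H; rewrite H ?mem_head // IH // => y ys.
by apply: H; rewrite in_cons ys orbT.
Qed.

Lemma system_count g K : gok g ->
  (K \in system g : nat) = count (fun b => vec (img g b) == vecS K) Bs.
Proof.
move=> Hg.
rewrite (eq_in_count (a2 := fun b => pf g @: blockset b == K)); last first.
  move=> b bB /=.
  have /andP [Hb _] := allP c_blocks b bB.
  by rewrite -vecS_blockset -pf_blockset // (inj_eq vecS_inj).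
rewrite -(count_map blockset (fun X => pf g @: X == K)).
have -> : count (fun X : {set 'I_14} => pf g @: X == K) (map blockset Bs) =
    count (pred1 K) (map (fun X : {set 'I_14} => pf g @: X) (map blockset Bs)).
  by rewrite count_map.
rewrite count_uniq_mem; last first.
  by rewrite map_inj_uniq ?uniqB //; apply: imset_inj; apply: pf_inj.
congr nat_of_bool; apply/imsetP/mapP.
- by case=> X; rewrite in_set => XB ->; exists X.
- by case=> X XB ->; exists X; rewrite ?in_set.
Qed.

Lemma get_fold0 (ks : seq (seq bool)) v : all (fun w => size w == 14) ks -> size v = 14 ->
  get v (foldl (fun t w => incr w t) (Leaf 0) ks) = count (pred1 v) ks.
Proof.
move=> Hks Hv; rewrite get_fold ?add0n //.
by apply/allP => w /(allP Hks); rewrite Hv.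
Qed.

Lemma keysH_size : all (fun w => size w == 14) keysH.
Proof.
apply/allP => w /flattenP [s /mapP [g _ ->] /mapP [b _ ->]].
by rewrite size_vec.
Qed.

Lemma get_TrH v : size v = 14 -> get v TrH = count (pred1 v) keysH.
Proof. move=> Hv; exact: (get_fold0 keysH_size Hv). Qed.

Lemma flatten_cons' (T : Type) (x : seq T) s : flatten (x :: s) = x ++ flatten s.
Proof. by []. Qed.
Lemma count_cons' (T : Type) (a : pred T) x s : count a (x :: s) = a x + count a s.
Proof. by []. Qed.

Lemma main_count (Ls' : seq (seq nat)) (K : {set 'I_14}) : all gok Ls' ->
  count (fun S : {set {set 'I_14}} => K \in S) (map system Ls') =
  count (pred1 (vecS K)) (flatten [seq [seq vec (img g b) | b <- Bs] | g <- Ls']).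
Proof.
elim: Ls' => [|g Ls' IH] // /andP [Hg Hr].
rewrite map_cons flatten_cons' count_cat map_cons count_cons' IH //.
by rewrite system_count // count_map.
Qed.

Lemma gok_lt g x : gok g -> x < 14 -> nth 0 g x < 14.
Proof.
case/andP => /andP [/eqP Hs _] Ha Hx.
by apply: (allP Ha); apply: mem_nth; rewrite Hs.
Qed.

Lemma gok_nth_inj g x y : gok g -> x < 14 -> y < 14 -> nth 0 g x = nth 0 g y -> x = y.
Proof.
case/andP => /andP [/eqP Hs Hu] _ Hx Hy /eqP.
by rewrite nth_uniq ?Hs // => /eqP.
Qed.

Lemma gok_comp t h : gok t -> gok h -> gok (comp t h).
Proof.
move=> Ht Hh; have Hh' := Hh; case/andP: Hh' => /andP [/eqP Hs Hu] Ha.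
apply/andP; split; first (apply/andP; split).
- by rewrite size_map Hs.
- rewrite map_inj_in_uniq // => x y /(allP Ha) Hx /(allP Ha) Hy.
  exact: gok_nth_inj.
- apply/allP => x /mapP [y /(allP Ha) Hy ->]; exact: gok_lt.
Qed.

Lemma nth_vec y i : i < 14 -> nth false (vec y) i = (i \in y).
Proof. by move=> Hi; rewrite (nth_map 0) ?size_iota // nth_iota. Qed.

Lemma nth_pv p w i : i < 14 -> nth false (pv p w) i = nth false w (nth 0 p i).
Proof. by move=> Hi; rewrite (nth_map 0) ?size_iota // nth_iota. Qed.

Lemma size_pv p w : size (pv p w) = 14.
Proof. by rewrite size_map size_iota. Qed.

Lemma gok_surj t j : gok t -> j < 14 -> exists2 i, i < 14 & nth 0 t i = j.
Proof.
move=> Ht Hj; have Ht' := Ht; case/andP: Ht' => /andP [/eqP Hs Hu] Ha.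
have sub : {subset t <= iota 0 14}.
  by move=> x xt; rewrite mem_iota add0n; apply: (allP Ha).
have Hle : size (iota 0 14) <= size t by rewrite size_iota Hs.
have [_ Heq] := uniq_min_size Hu sub Hle.
have jt : j \in t by rewrite Heq mem_iota add0n.
exists (index j t); first by rewrite -Hs index_mem.
exact: nth_index.
Qed.

Lemma mem_map_t t y i : gok t -> all (fun x => x < 14) y -> i < 14 ->
  (nth 0 t i \in map (nth 0 t) y) = (i \in y).
Proof.
move=> Ht Hy Hi; apply/mapP/idP.
- case=> x xy E; have Hx := allP Hy x xy.
  by rewrite (gok_nth_inj Ht Hi Hx E).
- by move=> iy; exists i.
Qed.

Lemma key t y w : gok t -> all (fun x => x < 14) y -> size w = 14 ->
  (vec (map (nth 0 t) y) == w) = (vec y == pv t w).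
Proof.
move=> Ht Hy Hw; apply/eqP/eqP => E.
- apply: (@eq_from_nth _ false); rewrite ?size_vec ?size_pv // => i Hi.
  by rewrite nth_pv // -E (nth_vec _ (gok_lt Ht Hi)) mem_map_t // nth_vec.
- apply: (@eq_from_nth _ false); rewrite ?size_vec ?Hw // => j Hj.
  have [i Hi <-] := gok_surj Ht Hj.
  by rewrite (nth_vec _ (gok_lt Ht Hi)) mem_map_t // -nth_vec // E nth_pv.
Qed.

Lemma img_comp t h b : gok h -> all (fun x => x < 14) b ->
  img (comp t h) b = map (nth 0 t) (img h b).
Proof.
case/andP => /andP [/eqP Hs _] _ Hb.
rewrite /img; elim: b Hb => [|x b IH] //= /andP [Hx Hb].
by rewrite IH // /comp (nth_map 0) ?Hs.
Qed.

Lemma split_t t (Hs' : seq (seq nat)) w : gok t -> all gok Hs' -> size w = 14 ->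
  count (pred1 w) (flatten [seq [seq vec (img g b) | b <- Bs] | g <- [seq comp t h | h <- Hs']])
  = count (pred1 (pv t w)) (flatten [seq [seq vec (img h b) | b <- Bs] | h <- Hs']).
Proof.
move=> Ht HH Hw; rewrite !count_flatten -!map_comp.
congr sumn; apply/eq_in_map => h hH.
change (count (pred1 w) [seq vec (img (comp t h) b) | b <- Bs] =
        count (pred1 (pv t w)) [seq vec (img h b) | b <- Bs]).
rewrite !count_map; apply: eq_in_count => b bB.
have /andP [Hb _] := allP c_blocks b bB.
have Hh := allP HH h hH.
rewrite /preim /pred1 /= img_comp // key //.
by apply/allP => x /mapP [y /(allP Hb) Hy ->]; apply: gok_lt.
Qed.

Lemma split_all (Ts' : seq (seq nat)) w : all gok Ts' -> size w = 14 ->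
  count (pred1 w) (flatten [seq [seq vec (img g b) | b <- Bs] | g <- [seq comp t h | t <- Ts', h <- Hs]])
  = sumn [seq count (pred1 (pv t w)) keysH | t <- Ts'].
Proof.
elim: Ts' => [|t Ts' IH] // /andP [Ht Hr] Hw.
rewrite allpairs_cons map_cat flatten_cat count_cat IH // map_cons.
by rewrite split_t // c_permsH.
Qed.

Lemma Ls_gok : all gok Ls.
Proof.
apply/allP => g /allpairsP [[t h] [/= tT hH ->]].
by apply: gok_comp; [apply: (allP c_permsT) | apply: (allP c_permsH)].
Qed.

Theorem corollary21 : exists F : seq {set {set 'I_14}}, large_set 3 4 14 720 F.
Proof.
exists Fam; split.
- move=> S /mapP [g gL ->]; apply: steiner_image; last exact: steinerB.
  by apply: pf_inj; apply: (allP Ls_gok).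
- move=> K HK.
  transitivity (count (pred1 (vecS K)) (flatten [seq [seq vec (img g b) | b <- Bs] | g <- Ls])).
    exact: (main_count K Ls_gok).
  transitivity (sumn [seq count (pred1 (pv t (vecS K))) keysH | t <- Ts]).
    exact: (split_all c_permsT (size_vecS K)).
  transitivity (sumn [seq get (pv t (vecS K)) TrH | t <- Ts]).
    by congr sumn; apply: eq_map => t; rewrite get_TrH // size_pv.
  by apply/eqP; exact: (allP c_count _ (bitsk_mem HK)).
Qed.
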